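(* Let $A>0$, $B\in\mathbb{R}$, $R\ge0$, and let $q_0=q_{0,R}$, where $q_{0,R}(x)=0$ for $x\le R$ and $q_{0,R}(x)=Ae^{2\mathrm{i} Bx}$ for $x>R$. Then the associated spectral functions are $$a_1(k)=1+\frac{A^2e^{4\mathrm{i} kR}}{4(k^2-B^2)},\qquad a_2(k)=1,\qquad b(k)=\frac{-\mathrm{i} Ae^{2\mathrm{i} R(k-B)}}{2(k-B)}.$$
   Context: Notation: $\sigma_3=\mathrm{diag}(1,-1)$, $X^{(i)}$ is the $i$-th column of $X$, $\mathbb{C}^\pm=\{\pm\mathrm{Im}\,k>0\}$. Let $U(x)=\begin{pmatrix}0&q_0(x)\\-\overline{q_0(-x)}&0\end{pmatrix}$, $U_+(x)=\begin{pmatrix}0&Ae^{2\mathrm{i} Bx}\\0&0\end{pmatrix}$, $U_-(x)=\begin{pmatrix}0&0\\-Ae^{2\mathrm{i} Bx}&0\end{pmatrix}$, $N_+(k)=\begin{pmatrix}1&\frac{-\mathrm{i} A}{2(k+B)}\\0&1\end{pmatrix}$, $N_-(k)=\begin{pmatrix}1&0\\\frac{-\mathrm{i} A}{2(k-B)}&1\end{pmatrix}$, $\Phi_\pm(x,k)=e^{\pm\mathrm{i} Bx\sigma_3}N_\pm(k)e^{-\mathrm{i}(k\pm B)x\sigma_3}$, $G_\pm(x,y,k)=\Phi_\pm(x,k)\Phi_\pm^{-1}(y,k)$. Let $\Psi_1,\Psi_2$ solve $\Psi_1(x,k)=e^{-\mathrm{i} Bx\sigma_3}N_-(k)+\int_{-\infty}^xG_-(x,y,k)(U-U_-)(y)\Psi_1(y,k)e^{\mathrm{i}(k-B)(x-y)\sigma_3}dy$,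 $\Psi_2(x,k)=e^{\mathrm{i} Bx\sigma_3}N_+(k)-\int_x^\infty G_+(x,y,k)(U-U_+)(y)\Psi_2(y,k)e^{\mathrm{i}(k+B)(x-y)\sigma_3}dy$. The spectral functions are $a_1(k)=\det(\Psi_1^{(1)}(0,k),\Psi_2^{(2)}(0,k))$, $a_2(k)=\det(\Psi_2^{(1)}(0,k),\Psi_1^{(2)}(0,k))$, $b(k)=\det(\Psi_2^{(1)}(0,k),\Psi_1^{(1)}(0,k))$ (on their natural domains, $k\in\overline{\mathbb{C}^+}\setminus\{\pm B\}$, $k\in\overline{\mathbb{C}^-}$, $k\in\mathbb{R}\setminus\{B\}$ respectively). *)

(* Defs.v *)
From Stdlib Require Import Reals.
From Coquelicot Require Import Coquelicot.
Open Scope R_scope.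

Definition cexp (z : C) : C :=
  (exp (Re z) * cos (Im z), exp (Re z) * sin (Im z)).

Definition Ceqb (z w : C) : bool :=
  if Req_EM_T (Re z) (Re w) then
    if Req_EM_T (Im z) (Im w) then true else false
  else false.

Record M2 := mkM2 { m11 : C; m12 : C; m21 : C; m22 : C }.
Definition V2 := (C * C)%type.

Definition M2mul (P Q : M2) : M2 :=
  mkM2 (m11 P * m11 Q + m12 P * m21 Q)%C (m11 P * m12 Q + m12 P * m22 Q)%C
       (m21 P * m11 Q + m22 P * m21 Q)%C (m21 P * m12 Q + m22 P * m22 Q)%C.
Definition M2sub (P Q : M2) : M2 :=
  mkM2 (m11 P - m11 Q)%C (m12 P - m12 Q)%C (m21 P - m21 Q)%C (m22 P - m22 Q)%C.
Definition M2det (P : M2) : C := (m11 P * m22 P - m12 P * m21 P)%C.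
Definition M2inv (P : M2) : M2 :=
  let d := M2det P in
  mkM2 (m22 P / d)%C (- m12 P / d)%C (- m21 P / d)%C (m11 P / d)%C.
Definition M2diag (a b : C) : M2 := mkM2 a 0 0 b.

Definition col1 (P : M2) : V2 := (m11 P, m21 P).
Definition col2 (P : M2) : V2 := (m12 P, m22 P).
Definition V2add (u v : V2) : V2 := (fst u + fst v, snd u + snd v)%C.
Definition V2sub (u v : V2) : V2 := (fst u - fst v, snd u - snd v)%C.
Definition det2 (u v : V2) : C := (fst u * snd v - snd u * fst v)%C.

Definition expsig3 (z : C) : M2 := M2diag (cexp z) (cexp (- z)).

Section Setup.
Variables (A B : R).

Definition q0R (R0 : R) (x : R) : C :=
  if Rle_dec x R0 then 0%C else (RtoC A * cexp (2 * Ci * RtoC B * RtoC x))%C.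

Definition Umat (q0 : R -> C) (x : R) : M2 :=
  mkM2 0 (q0 x) (Copp (Cconj (q0 (Ropp x)))) 0.
Definition Uplus (x : R) : M2 :=
  mkM2 0 (RtoC A * cexp (2 * Ci * RtoC B * RtoC x))%C 0 0.
Definition Uminus (x : R) : M2 :=
  mkM2 0 0 (- (RtoC A * cexp (2 * Ci * RtoC B * RtoC x)))%C 0.

Definition Nplus (k : C) : M2 :=
  mkM2 1 (- Ci * RtoC A / (2 * (k + RtoC B)))%C 0 1.
Definition Nminus (k : C) : M2 :=
  mkM2 1 0 (- Ci * RtoC A / (2 * (k - RtoC B)))%C 1.

Definition Phiplus (x : R) (k : C) : M2 :=
  M2mul (expsig3 (Ci * RtoC B * RtoC x))
        (M2mul (Nplus k) (expsig3 (- Ci * (k + RtoC B) * RtoC x))).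
Definition Phiminus (x : R) (k : C) : M2 :=
  M2mul (expsig3 (- Ci * RtoC B * RtoC x))
        (M2mul (Nminus k) (expsig3 (- Ci * (k - RtoC B) * RtoC x))).

(** This is an entire function of k:
    the apparent pole of N_{+-} at k = -+B is removable in the product, and at
    that single point G is given by its (continuous) limiting value. *)
Definition Gplus (x y : R) (k : C) : M2 :=
  if Ceqb k (- RtoC B)%C then
    M2mul (expsig3 (Ci * RtoC B * RtoC x))
      (M2mul (mkM2 1 (RtoC A * RtoC (x - y)) 0 1)
             (expsig3 (- Ci * RtoC B * RtoC y)))
  else M2mul (Phiplus x k) (M2inv (Phiplus y k)).
Definition Gminus (x y : R) (k : C) : M2 :=
  if Ceqb k (RtoC B) then
    M2mul (expsig3 (- Ci * RtoC B * RtoC x))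
      (M2mul (mkM2 1 0 (- (RtoC A * RtoC (x - y))) 1)%C
             (expsig3 (Ci * RtoC B * RtoC y)))
  else M2mul (Phiminus x k) (M2inv (Phiminus y k)).

Definition integrand1 (q0 : R -> C) (Psi1 : R -> C -> M2) (x : R) (k : C)
  (y : R) : M2 :=
  M2mul (Gminus x y k)
    (M2mul (M2sub (Umat q0 y) (Uminus y))
       (M2mul (Psi1 y k) (expsig3 (Ci * (k - RtoC B) * RtoC (x - y))))).
Definition integrand2 (q0 : R -> C) (Psi2 : R -> C -> M2) (x : R) (k : C)
  (y : R) : M2 :=
  M2mul (Gplus x y k)
    (M2mul (M2sub (Umat q0 y) (Uplus y))
       (M2mul (Psi2 y k) (expsig3 (Ci * (k + RtoC B) * RtoC (x - y))))).

Definition free1 (x : R) (k : C) : M2 :=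
  M2mul (expsig3 (- Ci * RtoC B * RtoC x)) (Nminus k).
Definition free2 (x : R) (k : C) : M2 :=
  M2mul (expsig3 (Ci * RtoC B * RtoC x)) (Nplus k).
End Setup.

Definition is_int_left (f : R -> V2) (x : R) (l : V2) : Prop :=
  is_RInt_gen (fun y => fst (f y)) (Rbar_locally m_infty) (at_point x) (fst l) /\
  is_RInt_gen (fun y => snd (f y)) (Rbar_locally m_infty) (at_point x) (snd l).
Definition is_int_right (f : R -> V2) (x : R) (l : V2) : Prop :=
  is_RInt_gen (fun y => fst (f y)) (at_point x) (Rbar_locally p_infty) (fst l) /\
  is_RInt_gen (fun y => snd (f y)) (at_point x) (Rbar_locally p_infty) (snd l).

Definition solves1 (A B : R) (q0 : R -> C) (Psi1 : R -> C -> M2)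
  (col : M2 -> V2) (k : C) : Prop :=
  forall x : R, exists I : V2,
    is_int_left (fun y => col (integrand1 A B q0 Psi1 x k y)) x I /\
    col (Psi1 x k) = V2add (col (free1 A B x k)) I.
Definition solves2 (A B : R) (q0 : R -> C) (Psi2 : R -> C -> M2)
  (col : M2 -> V2) (k : C) : Prop :=
  forall x : R, exists I : V2,
    is_int_right (fun y => col (integrand2 A B q0 Psi2 x k y)) x I /\
    col (Psi2 x k) = V2sub (col (free2 A B x k)) I.

(* Main.v *)
Require Import Defs.
From Stdlib Require Import Reals Lra.
From Coquelicot Require Import Coquelicot.
Open Scope R_scope.

Ltac cpair := apply injective_projections; simpl.

Lemma cexp_add a b : cexp (a + b)%C = (cexp a * cexp b)%C.
Proof. destruct a as [a1 a2], b as [b1 b2]. unfold cexp. simpl.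
rewrite exp_plus, cos_plus, sin_plus. cpair; ring. Qed.

Lemma cexp_ext a b : Re a = Re b -> Im a = Im b -> cexp a = cexp b.
Proof. unfold cexp; intros -> ->; reflexivity. Qed.

Lemma cexp_0 : cexp 0 = 1%C.
Proof. unfold cexp. simpl. rewrite exp_0, cos_0, sin_0. cpair; ring. Qed.

Lemma cexp_neq0 z : cexp z <> 0%C.
Proof. unfold cexp. intro H. injection H as H1 H2.
pose proof (exp_pos (Re z)). pose proof (sin2_cos2 (Im z)).
apply Rmult_integral in H1; apply Rmult_integral in H2.
destruct H1 as [H1|H1]; [lra|]. destruct H2 as [H2|H2]; [lra|].
unfold Rsqr in H0. rewrite H1, H2 in H0. lra. Qed.

Lemma cexp_opp z : cexp (- z)%C = (/ cexp z)%C.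
Proof. assert (H := cexp_add z (-z)%C).
replace (z + - z)%C with (RtoC 0) in H by ring. rewrite cexp_0 in H.
assert (Hn := cexp_neq0 z).
replace (cexp (-z)) with (cexp z * cexp (-z) / cexp z)%C by (field; auto).
rewrite <- H. field; auto. Qed.

Lemma cexp_conj z : Cconj (cexp z) = cexp (Cconj z).
Proof. destruct z. unfold cexp, Cconj, Re, Im. simpl. rewrite cos_neg, sin_neg. cpair; ring. Qed.

Lemma test y B : cexp (2 * Ci * RtoC B * RtoC y)%C = cexp (Ci * RtoC (2*B*y))%C.
Proof. apply cexp_ext; simpl; ring. Qed.

Lemma is_derive_C (u v : R -> R) x du dv :
  is_derive u x du -> is_derive v x dv ->
  @is_derive R_AbsRing C_R_NormedModule (fun t => (u t, v t) : C) x ((du, dv) : C).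
Proof.
intros Hu Hv.
assert (H := @is_derive_plus R_AbsRing C_R_NormedModule _ _ x _ _
  (@is_derive_scal_l R_AbsRing C_R_NormedModule u x du ((1,0):C) Hu)
  (@is_derive_scal_l R_AbsRing C_R_NormedModule v x dv ((0,1):C) Hv)).
replace ((du,dv):C) with (@plus C_R_NormedModule (@scal R_Ring C_R_ModuleSpace du ((1,0):C)) (@scal R_Ring C_R_ModuleSpace dv ((0,1):C))).
- eapply is_derive_ext; [|exact H]. intro t. simpl. unfold plus, scal; simpl.
  unfold Cplus. simpl. apply injective_projections; cbn -[Rplus Rmult]; ring.
- unfold plus, scal; simpl. unfold Cplus. simpl. apply injective_projections; cbn -[Rplus Rmult]; ring.
Qed.

Lemma is_derive_wcexp (w c : C) x :
  @is_derive R_AbsRing C_R_NormedModule (fun t:R => (w * cexp (c * RtoC t))%C) x (w * c * cexp (c * RtoC x))%C.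
Proof.
 eapply is_derive_ext. { intro t. symmetry. apply surjective_pairing. }
 rewrite (surjective_pairing (w*c*cexp _)%C).
 apply is_derive_C; destruct w, c; unfold cexp, Re, Im; simpl; auto_derive; auto; unfold Rminus; ring.
Qed.

Lemma is_RInt_cexp (c : C) (a b : R) : c <> 0%C ->
  @is_RInt C_R_NormedModule (fun y => cexp (c * RtoC y)%C) a b
     ((cexp (c * RtoC b) - cexp (c * RtoC a)) / c)%C.
Proof.
intro Hc.
assert (H := @is_RInt_derive C_R_CompleteNormedModule
  (fun t => (/ c * cexp (c * RtoC t))%C) (fun t => (/ c * c * cexp (c * RtoC t))%C) a b
  (fun x _ => is_derive_wcexp (/ c) c x)
  (fun x _ => ex_derive_continuous _ x (ex_intro _ _ (is_derive_wcexp (/ c * c) c x)))).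
replace ((cexp (c * RtoC b) - cexp (c * RtoC a)) / c)%C with
  (@minus C_R_NormedModule ((/ c * cexp (c * RtoC b))%C) ((/ c * cexp (c * RtoC a))%C)).
2:{ unfold minus, plus, opp; change (/ c * cexp (c * RtoC b) - / c * cexp (c * RtoC a) = (cexp (c * RtoC b) - cexp (c * RtoC a)) / c)%C. field. exact Hc. }
eapply is_RInt_ext; [| exact H]. intros x _. change ((/ c * c * cexp (c * RtoC x))%C = cexp (c * RtoC x)). field. exact Hc.
Qed.

Notation PV := (prod_NormedModule R_AbsRing R_NormedModule R_NormedModule).
Lemma int_left_val (f : R -> C) x c (l l' : C) :
  @is_RInt_gen PV f (Rbar_locally m_infty) (at_point x) l -> c <= x ->
  (forall y, y < c -> f y = 0%C) -> @is_RInt PV f c x l' -> l = l'.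
Proof.
intros H Hcx Hz Hi.
assert (H1 : @is_RInt_gen PV f (Rbar_locally m_infty) (at_point c) (plus l (opp l'))).
{ apply (is_RInt_gen_Chasles f x); [exact H|].
  apply is_RInt_gen_at_point. apply (@is_RInt_swap PV). exact Hi. }
assert (H2 := is_RInt_gen_scal f 0 _ H1).
assert (H3 : @is_RInt_gen PV f (Rbar_locally m_infty) (at_point c) (scal 0 (plus l (opp l')))).
{ eapply is_RInt_gen_ext; [| exact H2].
  exists (fun a => a < c) (fun b => b = c).
  - exists c. intros; auto.
  - reflexivity.
  - intros a b Ha Hb t Ht. simpl in Ht. subst b.
    rewrite Rmin_left in Ht by lra. rewrite Rmax_right in Ht by lra.
    rewrite Hz by lra. apply injective_projections; cbn -[Rmult Rplus]; ring. }
apply (@is_RInt_gen_unique C_R_CompleteNormedModule _ _ (Proper_StrongProper _ (Rbar_locally_filter _)) (Proper_StrongProper _ (at_point_filter _))) in H1.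
apply (@is_RInt_gen_unique C_R_CompleteNormedModule _ _ (Proper_StrongProper _ (Rbar_locally_filter _)) (Proper_StrongProper _ (at_point_filter _))) in H3.
rewrite H3 in H1. destruct l as [l1 l2], l' as [m1 m2].
cbn -[Rplus Rmult Ropp] in H1. injection H1; intros. cbn in H0, H4.
apply injective_projections; simpl; lra.
Qed.

Lemma int_right_val (f : R -> C) x c (l l' : C) :
  @is_RInt_gen PV f (at_point x) (Rbar_locally p_infty) l -> x <= c ->
  (forall y, c < y -> f y = 0%C) -> @is_RInt PV f x c l' -> l = l'.
Proof.
intros H Hcx Hz Hi.
assert (H1 : @is_RInt_gen PV f (at_point c) (Rbar_locally p_infty) (plus (opp l') l)).
{ apply (is_RInt_gen_Chasles f x); [|exact H].
  apply is_RInt_gen_at_point. apply (@is_RInt_swap PV). exact Hi. }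
assert (H2 := is_RInt_gen_scal f 0 _ H1).
assert (H3 : @is_RInt_gen PV f (at_point c) (Rbar_locally p_infty) (scal 0 (plus (opp l') l))).
{ eapply is_RInt_gen_ext; [| exact H2].
  exists (fun b => b = c) (fun a => c < a).
  - reflexivity.
  - exists c. intros; auto.
  - intros b a Hb Ha t Ht. simpl in Ht. subst b.
    rewrite Rmin_left in Ht by lra. rewrite Rmax_right in Ht by lra.
    rewrite Hz by lra. apply injective_projections; cbn -[Rmult Rplus]; ring. }
apply (@is_RInt_gen_unique C_R_CompleteNormedModule _ _ (Proper_StrongProper (at_point (c:R_UniformSpace)) (at_point_filter c)) (Proper_StrongProper _ (Rbar_locally_filter _))) in H1.
apply (@is_RInt_gen_unique C_R_CompleteNormedModule _ _ (Proper_StrongProper (at_point (c:R_UniformSpace)) (at_point_filter c)) (Proper_StrongProper _ (Rbar_locally_filter _))) in H3.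
rewrite H3 in H1. destruct l as [l1 l2], l' as [m1 m2].
cbn -[Rplus Rmult Ropp] in H1. injection H1; intros. cbn in H0, H4.
apply injective_projections; simpl; lra.
Qed.

Lemma is_RInt_wcexp (w c : C) (a b : R) : c <> 0%C ->
  @is_RInt C_R_NormedModule (fun y => (w * cexp (c * RtoC y))%C) a b
     (w * (cexp (c * RtoC b) - cexp (c * RtoC a)) / c)%C.
Proof.
intro Hc.
assert (H := @is_RInt_derive C_R_CompleteNormedModule
  (fun t => (w / c * cexp (c * RtoC t))%C) (fun t => (w / c * c * cexp (c * RtoC t))%C) a b
  (fun x _ => is_derive_wcexp (w / c) c x)
  (fun x _ => ex_derive_continuous _ x (ex_intro _ _ (is_derive_wcexp (w / c * c) c x)))).
replace (w * (cexp (c * RtoC b) - cexp (c * RtoC a)) / c)%C with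
  (@minus C_R_NormedModule ((w / c * cexp (c * RtoC b))%C) ((w / c * cexp (c * RtoC a))%C)).
2:{ change (w / c * cexp (c * RtoC b) - w / c * cexp (c * RtoC a) = w * (cexp (c * RtoC b) - cexp (c * RtoC a)) / c)%C. field. exact Hc. }
eapply is_RInt_ext; [| exact H]. intros x _. change ((w / c * c * cexp (c * RtoC x))%C = (w * cexp (c * RtoC x))%C). field. exact Hc.
Qed.

Ltac mcbn := cbv beta iota zeta delta [M2mul M2inv M2det M2diag expsig3 Phiminus Phiplus Nminus Nplus m11 m12 m21 m22 col1 col2 fst snd free1 free2 integrand1 integrand2 M2sub Umat Uplus Uminus].

Lemma Ceqb_false z w : z <> w -> Ceqb z w = false.
Proof. intro H. unfold Ceqb. destruct (Req_EM_T (Re z) (Re w)); auto.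
destruct (Req_EM_T (Im z) (Im w)); auto. exfalso; apply H.
destruct z, w; unfold Re, Im in *; simpl in *; subst; auto. Qed.

Lemma m12_Gminus A B x y k : m12 (Gminus A B x y k) = 0%C.
Proof. unfold Gminus. destruct (Ceqb _ _); unfold Phiminus; mcbn; unfold Cdiv; ring. Qed.

Lemma m21_Gplus A B x y k : m21 (Gplus A B x y k) = 0%C.
Proof. unfold Gplus. destruct (Ceqb _ _); unfold Phiplus; mcbn; unfold Cdiv; ring. Qed.

Lemma det_Phiminus A B y k : M2det (Phiminus A B y k) = 1%C.
Proof. unfold Phiminus; mcbn. generalize (- Ci * RtoC A / (2 * (k - RtoC B)))%C; intro n. rewrite !cexp_opp. field.
split; apply cexp_neq0. Qed.

Lemma det_Phiplus A B y k : M2det (Phiplus A B y k) = 1%C.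
Proof. unfold Phiplus; mcbn. generalize (- Ci * RtoC A / (2 * (k + RtoC B)))%C; intro n. rewrite !cexp_opp. field.
split; apply cexp_neq0. Qed.

Lemma m22_Gminus A B x y k : k <> RtoC B ->
  m22 (Gminus A B x y k) = cexp (Ci * k * RtoC (x - y))%C.
Proof. intro Hk. unfold Gminus. rewrite Ceqb_false by auto.
unfold M2inv. cbv zeta. rewrite det_Phiminus. unfold Phiminus; mcbn. generalize (- Ci * RtoC A / (2 * (k - RtoC B)))%C; intro n. rewrite !cexp_opp.
assert (E : (cexp (Ci * k * RtoC (x - y)) * (cexp (- Ci * RtoC B * RtoC x) * cexp (- Ci * (k - RtoC B) * RtoC x)))%C
   = (cexp (- Ci * RtoC B * RtoC y) * cexp (- Ci * (k - RtoC B) * RtoC y))%C).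
{ rewrite <- !cexp_add. apply cexp_ext; destruct k; simpl; ring. }
assert (H1 := cexp_neq0 (- Ci * RtoC B * RtoC x)%C).
assert (H2 := cexp_neq0 (- Ci * (k - RtoC B) * RtoC x)%C).
assert (H3 := cexp_neq0 (- Ci * RtoC B * RtoC y)%C).
assert (H4 := cexp_neq0 (- Ci * (k - RtoC B) * RtoC y)%C).
replace (cexp (Ci * k * RtoC (x - y))) with ((cexp (- Ci * RtoC B * RtoC y) * cexp (- Ci * (k - RtoC B) * RtoC y)) / (cexp (- Ci * RtoC B * RtoC x) * cexp (- Ci * (k - RtoC B) * RtoC x)))%C by (rewrite <- E; field; auto).
field. auto. Qed.

Lemma m11_Gplus A B x y k : k <> (- RtoC B)%C ->
  m11 (Gplus A B x y k) = cexp (- Ci * k * RtoC (x - y))%C.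
Proof. intro Hk. unfold Gplus. rewrite Ceqb_false by auto.
unfold M2inv. cbv zeta. rewrite det_Phiplus. unfold Phiplus; mcbn. generalize (- Ci * RtoC A / (2 * (k + RtoC B)))%C; intro n. rewrite !cexp_opp.
assert (E : (cexp (- Ci * k * RtoC (x - y)) * (cexp (Ci * RtoC B * RtoC y) * cexp (- Ci * (k + RtoC B) * RtoC y)))%C
   = (cexp (Ci * RtoC B * RtoC x) * cexp (- Ci * (k + RtoC B) * RtoC x))%C).
{ rewrite <- !cexp_add. apply cexp_ext; destruct k; simpl; ring. }
assert (H1 := cexp_neq0 (Ci * RtoC B * RtoC x)%C).
assert (H2 := cexp_neq0 (- Ci * (k + RtoC B) * RtoC x)%C).
assert (H3 := cexp_neq0 (Ci * RtoC B * RtoC y)%C).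
assert (H4 := cexp_neq0 (- Ci * (k + RtoC B) * RtoC y)%C).
replace (cexp (- Ci * k * RtoC (x - y))) with ((cexp (Ci * RtoC B * RtoC x) * cexp (- Ci * (k + RtoC B) * RtoC x)) / (cexp (Ci * RtoC B * RtoC y) * cexp (- Ci * (k + RtoC B) * RtoC y)))%C by (rewrite <- E; field; auto).
field. auto. Qed.

Lemma Cconj_RtoC r : Cconj (RtoC r) = RtoC r.
Proof. unfold Cconj, RtoC; simpl. apply injective_projections; simpl; ring. Qed.

Section M.
Variables (A B R0 : R).
Let q := q0R A B R0.
Let Mm y := M2sub (Umat q y) (Uminus A B y).
Let Mp y := M2sub (Umat q y) (Uplus A B y).

Lemma Mm_11 y : m11 (Mm y) = 0%C. Proof. unfold Mm; mcbn; ring. Qed.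
Lemma Mm_22 y : m22 (Mm y) = 0%C. Proof. unfold Mm; mcbn; ring. Qed.
Lemma Mm_12 y : y <= R0 -> m12 (Mm y) = 0%C.
Proof. intro H. unfold Mm, q; mcbn. unfold q0R. destruct (Rle_dec y R0); [ring|lra]. Qed.
Lemma Mm_21_zero y : y < - R0 -> m21 (Mm y) = 0%C.
Proof. intro H. unfold Mm, q; mcbn. unfold q0R. destruct (Rle_dec (- y) R0); [lra|].
rewrite Cmult_conj, cexp_conj, Cconj_RtoC.
replace (cexp (Cconj (2 * Ci * RtoC B * RtoC (- y)))) with (cexp (2 * Ci * RtoC B * RtoC y))
  by (apply cexp_ext; simpl; ring). ring. Qed.
Lemma Mm_21_val y : - R0 <= y -> m21 (Mm y) = (RtoC A * cexp (2 * Ci * RtoC B * RtoC y))%C.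
Proof. intro H. unfold Mm, q; mcbn. unfold q0R. destruct (Rle_dec (- y) R0); [|lra].
rewrite Cconj_RtoC. ring. Qed.

Lemma Mp_11 y : m11 (Mp y) = 0%C. Proof. unfold Mp; mcbn; ring. Qed.
Lemma Mp_22 y : m22 (Mp y) = 0%C. Proof. unfold Mp; mcbn; ring. Qed.
Lemma Mp_21 y : - R0 <= y -> m21 (Mp y) = 0%C.
Proof. intro H. unfold Mp, q; mcbn. unfold q0R. destruct (Rle_dec (- y) R0); [|lra].
rewrite Cconj_RtoC. ring. Qed.
Lemma Mp_12_zero y : R0 < y -> m12 (Mp y) = 0%C.
Proof. intro H. unfold Mp, q; mcbn. unfold q0R. destruct (Rle_dec y R0); [lra|]. ring. Qed.
Lemma Mp_12_val y : y <= R0 -> m12 (Mp y) = (- (RtoC A * cexp (2 * Ci * RtoC B * RtoC y)))%C.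
Proof. intro H. unfold Mp, q; mcbn. unfold q0R. destruct (Rle_dec y R0); [|lra]. ring. Qed.
End M.

Lemma gen_top_zero G M X : m12 G = 0%C -> m11 M = 0%C -> m12 M = 0%C ->
  fst (col1 (M2mul G (M2mul M X))) = 0%C /\ fst (col2 (M2mul G (M2mul M X))) = 0%C.
Proof. intros H1 H2 H3. destruct G, M, X; simpl in *; subst; split; ring. Qed.

Lemma gen_bot_zero G M X : m21 G = 0%C -> m21 M = 0%C -> m22 M = 0%C ->
  snd (col1 (M2mul G (M2mul M X))) = 0%C /\ snd (col2 (M2mul G (M2mul M X))) = 0%C.
Proof. intros H1 H2 H3. destruct G, M, X; simpl in *; subst; split; ring. Qed.

Lemma gen_all_zero G M X : m11 M = 0%C -> m12 M = 0%C -> m21 M = 0%C -> m22 M = 0%C ->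
  col1 (M2mul G (M2mul M X)) = (RtoC 0, RtoC 0) /\ col2 (M2mul G (M2mul M X)) = (RtoC 0, RtoC 0).
Proof. intros H1 H2 H3 H4. destruct G, M, X; simpl in *; subst; split;
 apply injective_projections; simpl; ring. Qed.

Lemma gen_col2_m_zero G M P E : m11 M = 0%C -> m12 M = 0%C -> m22 M = 0%C ->
  m12 E = 0%C -> m12 P = 0%C ->
  col2 (M2mul G (M2mul M (M2mul P E))) = (RtoC 0, RtoC 0).
Proof. intros H1 H2 H3 H4 H5. destruct G, M, P, E; simpl in *; subst;
 apply injective_projections; simpl; ring. Qed.

Lemma gen_col1_p_zero G M P E : m11 M = 0%C -> m21 M = 0%C -> m22 M = 0%C ->
  m21 E = 0%C -> m21 P = 0%C ->
  col1 (M2mul G (M2mul M (M2mul P E))) = (RtoC 0, RtoC 0).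
Proof. intros H1 H2 H3 H4 H5. destruct G, M, P, E; simpl in *; subst;
 apply injective_projections; simpl; ring. Qed.

Lemma gen_col1_m G M P E : m12 G = 0%C -> m11 M = 0%C -> m12 M = 0%C -> m22 M = 0%C ->
  m21 E = 0%C ->
  snd (col1 (M2mul G (M2mul M (M2mul P E)))) = (m22 G * (m21 M * (m11 P * m11 E)))%C.
Proof. intros H1 H2 H3 H4 H5. destruct G, M, P, E; simpl in *; subst; ring. Qed.

Lemma gen_col2_p G M P E : m21 G = 0%C -> m11 M = 0%C -> m21 M = 0%C -> m22 M = 0%C ->
  m12 E = 0%C ->
  fst (col2 (M2mul G (M2mul M (M2mul P E)))) = (m11 G * (m12 M * (m22 P * m22 E)))%C.
Proof. intros H1 H2 H3 H4 H5. destruct G, M, P, E; simpl in *; subst; ring. Qed.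

Lemma cexp_is1 z : Re z = 0 -> Im z = 0 -> cexp z = 1%C.
Proof. intros. rewrite <- cexp_0. apply cexp_ext; simpl; auto. Qed.

Lemma psi1_top A B R0 Psi1 k col : (col = col1 \/ col = col2) ->
  solves1 A B (q0R A B R0) Psi1 col k -> forall x, x <= R0 ->
  fst (col (Psi1 x k)) = fst (col (free1 A B x k)).
Proof.
intros Hc Hs x Hx. destruct (Hs x) as [I [[HI1 _] HE]]. rewrite HE. unfold V2add; simpl fst at 1.
assert (H0 : fst I = RtoC 0).
{ apply (int_left_val _ x x _ (RtoC 0) HI1); [lra | | exact (@is_RInt_point PV _ x)].
  intros y Hy. unfold integrand1.
  destruct (gen_top_zero (Gminus A B x y k) (M2sub (Umat (q0R A B R0) y) (Uminus A B y))
     (M2mul (Psi1 y k) (expsig3 (Ci * (k - RtoC B) * RtoC (x - y)))) (m12_Gminus _ _ _ _ _)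
     (Mm_11 _ _ _ _) (Mm_12 A B R0 y ltac:(lra))) as [T1 T2].
  destruct Hc; subst col; assumption. }
rewrite H0. change (fst (col (free1 A B x k)) + 0 = fst (col (free1 A B x k)))%C. ring.
Qed.

Lemma psi2_bot A B R0 Psi2 k col : (col = col1 \/ col = col2) ->
  solves2 A B (q0R A B R0) Psi2 col k -> forall x, - R0 <= x ->
  snd (col (Psi2 x k)) = snd (col (free2 A B x k)).
Proof.
intros Hc Hs x Hx. destruct (Hs x) as [I [[_ HI2] HE]]. rewrite HE. unfold V2sub; simpl snd at 1.
assert (H0 : snd I = RtoC 0).
{ apply (int_right_val _ x x _ (RtoC 0) HI2); [lra | | exact (@is_RInt_point PV _ x)].
  intros y Hy. unfold integrand2.
  destruct (gen_bot_zero (Gplus A B x y k) (M2sub (Umat (q0R A B R0) y) (Uplus A B y))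
     (M2mul (Psi2 y k) (expsig3 (Ci * (k + RtoC B) * RtoC (x - y)))) (m21_Gplus _ _ _ _ _)
     (Mp_21 A B R0 y ltac:(lra)) (Mp_22 _ _ _ _)) as [T1 T2].
  destruct Hc; subst col; assumption. }
rewrite H0. change (snd (col (free2 A B x k)) - 0 = snd (col (free2 A B x k)))%C. ring.
Qed.

Lemma Ci2 : (Ci * Ci = - 1)%C.
Proof. unfold Ci. apply injective_projections; simpl; ring. Qed.

Lemma Ci_neq0 : Ci <> 0%C.
Proof. intro H. injection H. lra. Qed.

Lemma alg_beta (A E d : C) : d <> 0%C ->
  (1 * (- Ci * A / (2 * d)) + A * (1 - E) / (- (2 * Ci) * d) = - Ci * A * E / (2 * d))%C.
Proof. intro Hd. assert (Hi := Ci_neq0).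
replace (A * (1 - E) / (- (2 * Ci) * d))%C with
  (A * (1 - E) / (- (2 * Ci) * d) * (- (Ci * Ci)))%C by (rewrite Ci2; field; auto).
field. auto. Qed.

Lemma alg_gamma (A F d : C) : d <> 0%C ->
  (- Ci * A / (2 * d) - - A * (F - 1) / ((2 * Ci) * d) = - Ci * A * F / (2 * d))%C.
Proof. intro Hd. assert (Hi := Ci_neq0).
replace (- A * (F - 1) / ((2 * Ci) * d))%C with
  (- A * (F - 1) / ((2 * Ci) * d) * (- (Ci * Ci)))%C by (rewrite Ci2; field; auto).
field. auto. Qed.

Lemma alg_final (A E F k B : C) : (k - B <> 0)%C -> (k + B <> 0)%C ->
  (1 * 1 - (- Ci * A * E / (2 * (k - B))) * (- Ci * A * F / (2 * (k + B)))
   = 1 + A * A * (E * F) / (4 * (k ^ 2 - B * B)))%C.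
Proof. intros H1 H2.
replace ((- Ci * A * E / (2 * (k - B))) * (- Ci * A * F / (2 * (k + B))))%C with
  ((Ci * Ci) * (A * A * E * F) / (4 * ((k - B) * (k + B))))%C by (field; auto).
rewrite Ci2. replace (k ^ 2 - B * B)%C with ((k - B) * (k + B))%C by ring.
field. auto. Qed.

Lemma sub_neq0 (k b : C) : k <> b -> (k - b <> 0)%C.
Proof. intros H E. apply H. replace k with ((k - b) + b)%C by ring. rewrite E. ring. Qed.

Lemma psi1_col2_0 A B R0 Psi1 k : 0 <= R0 -> solves1 A B (q0R A B R0) Psi1 col2 k ->
  fst (col2 (Psi1 0 k)) = 0%C /\ snd (col2 (Psi1 0 k)) = 1%C.
Proof.
intros HR Hs. split.
- rewrite (psi1_top A B R0 Psi1 k col2 (or_intror eq_refl) Hs 0 HR). unfold free1; mcbn; ring.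
- destruct (Hs 0) as [I [[_ HI2] HE]]. rewrite HE. unfold V2add; simpl snd at 1.
  assert (H0 : snd I = RtoC 0).
  { apply (int_left_val _ 0 0 _ (RtoC 0) HI2); [lra | | exact (@is_RInt_point PV _ 0)].
    intros y Hy. unfold integrand1.
    rewrite gen_col2_m_zero; [reflexivity | apply Mm_11 | apply Mm_12; lra | apply Mm_22 | reflexivity |].
    change (m12 (Psi1 y k)) with (fst (col2 (Psi1 y k))).
    rewrite (psi1_top A B R0 Psi1 k col2 (or_intror eq_refl) Hs y ltac:(lra)).
    unfold free1; mcbn; ring. }
  rewrite H0. unfold free1; mcbn. rewrite cexp_is1 by (simpl; ring). ring.
Qed.

Lemma psi2_col1_0 A B R0 Psi2 k : 0 <= R0 -> solves2 A B (q0R A B R0) Psi2 col1 k ->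
  fst (col1 (Psi2 0 k)) = 1%C /\ snd (col1 (Psi2 0 k)) = 0%C.
Proof.
intros HR Hs. split.
- destruct (Hs 0) as [I [[HI1 _] HE]]. rewrite HE. unfold V2sub; simpl fst at 1.
  assert (H0 : fst I = RtoC 0).
  { apply (int_right_val _ 0 0 _ (RtoC 0) HI1); [lra | | exact (@is_RInt_point PV _ 0)].
    intros y Hy. unfold integrand2.
    rewrite gen_col1_p_zero; [reflexivity | apply Mp_11 | apply Mp_21; lra | apply Mp_22 | reflexivity |].
    change (m21 (Psi2 y k)) with (snd (col1 (Psi2 y k))).
    rewrite (psi2_bot A B R0 Psi2 k col1 (or_introl eq_refl) Hs y ltac:(lra)).
    unfold free2; mcbn; ring. }
  rewrite H0. unfold free2; mcbn. rewrite cexp_is1 by (simpl; ring). ring.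
- rewrite (psi2_bot A B R0 Psi2 k col1 (or_introl eq_refl) Hs 0 ltac:(lra)). unfold free2; mcbn; ring.
Qed.

Lemma psi1_col1_0 A B R0 Psi1 k : 0 <= R0 -> k <> RtoC B ->
  solves1 A B (q0R A B R0) Psi1 col1 k ->
  fst (col1 (Psi1 0 k)) = 1%C /\
  snd (col1 (Psi1 0 k)) = (- Ci * RtoC A * cexp (2 * Ci * RtoC R0 * (k - RtoC B)) / (2 * (k - RtoC B)))%C.
Proof.
intros HR Hk Hs. split.
- rewrite (psi1_top A B R0 Psi1 k col1 (or_introl eq_refl) Hs 0 HR). unfold free1; mcbn.
  rewrite cexp_is1 by (simpl; ring). ring.
- destruct (Hs 0) as [I [[_ HI2] HE]]. rewrite HE. unfold V2add; simpl snd at 1.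
  set (c := (- (2 * Ci) * (k - RtoC B))%C).
  assert (Hc : c <> 0%C).
  { unfold c. apply Cmult_neq_0; [|apply sub_neq0; auto].
    intro H. apply Ci_neq0. replace Ci with (- (2 * Ci) * (- / 2))%C by field.
    rewrite H. ring. }
  assert (H0 : snd I = (RtoC A * (cexp (c * RtoC 0) - cexp (c * RtoC (- R0))) / c)%C).
  { apply (int_left_val _ 0 (- R0) _ _ HI2); [lra | |].
    - intros y Hy. unfold integrand1.
      rewrite (proj1 (gen_all_zero _ _ _ (Mm_11 A B R0 y) (Mm_12 A B R0 y ltac:(lra))
                 (Mm_21_zero A B R0 y Hy) (Mm_22 A B R0 y))). reflexivity.
    - eapply is_RInt_ext; [| exact (is_RInt_wcexp (RtoC A) c (- R0) 0 Hc)].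
      intros y Hy. rewrite Rmin_left in Hy by lra. rewrite Rmax_right in Hy by lra.
      match goal with |- ?a = ?b => change (@eq C a b) end.
      unfold integrand1.
      rewrite gen_col1_m; [| apply m12_Gminus | apply Mm_11 | apply Mm_12; lra | apply Mm_22 | reflexivity].
      rewrite m22_Gminus by auto. rewrite Mm_21_val by lra.
      change (m11 (Psi1 y k)) with (fst (col1 (Psi1 y k))).
      rewrite (psi1_top A B R0 Psi1 k col1 (or_introl eq_refl) Hs y ltac:(lra)).
      unfold free1; mcbn.
      replace (cexp (c * RtoC y)) with
        (cexp (Ci * k * RtoC (0 - y)) * cexp (2 * Ci * RtoC B * RtoC y) *
         cexp (- Ci * RtoC B * RtoC y) * cexp (Ci * (k - RtoC B) * RtoC (0 - y)))%C.
      + ring.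
      + rewrite <- !cexp_add. unfold c. apply cexp_ext; destruct k; simpl; ring. }
  rewrite H0. unfold free1; mcbn.
  rewrite (cexp_is1 (- (- Ci * RtoC B * RtoC 0)))%C by (simpl; ring).
  rewrite (cexp_is1 (c * RtoC 0)) by (unfold c; destruct k; simpl; ring).
  replace (cexp (c * RtoC (- R0))) with (cexp (2 * Ci * RtoC R0 * (k - RtoC B)))
    by (unfold c; apply cexp_ext; destruct k; simpl; ring).
  unfold c. rewrite <- alg_beta by (apply sub_neq0; auto). ring.
Qed.

Lemma psi2_col2_0 A B R0 Psi2 k : 0 <= R0 -> k <> (- RtoC B)%C ->
  solves2 A B (q0R A B R0) Psi2 col2 k ->
  fst (col2 (Psi2 0 k)) = (- Ci * RtoC A * cexp (2 * Ci * RtoC R0 * (k + RtoC B)) / (2 * (k + RtoC B)))%C /\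
  snd (col2 (Psi2 0 k)) = 1%C.
Proof.
intros HR Hk Hs.
assert (Hkb : (k + RtoC B <> 0)%C).
{ intro H. apply Hk. replace k with ((k + RtoC B) - RtoC B)%C by ring. rewrite H. ring. }
split.
- destruct (Hs 0) as [I [[HI1 _] HE]]. rewrite HE. unfold V2sub; simpl fst at 1.
  set (c := ((2 * Ci) * (k + RtoC B))%C).
  assert (Hc : c <> 0%C).
  { unfold c. apply Cmult_neq_0; auto.
    intro H. apply Ci_neq0. replace Ci with ((2 * Ci) * (/ 2))%C by field.
    rewrite H. ring. }
  assert (H0 : fst I = (- RtoC A * (cexp (c * RtoC R0) - cexp (c * RtoC 0)) / c)%C).
  { apply (int_right_val _ 0 R0 _ _ HI1); [lra | |].
    - intros y Hy. unfold integrand2.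
      rewrite (proj2 (gen_all_zero _ _ _ (Mp_11 A B R0 y) (Mp_12_zero A B R0 y Hy)
                 (Mp_21 A B R0 y ltac:(lra)) (Mp_22 A B R0 y))). reflexivity.
    - eapply is_RInt_ext; [| exact (is_RInt_wcexp (- RtoC A) c 0 R0 Hc)].
      intros y Hy. rewrite Rmin_left in Hy by lra. rewrite Rmax_right in Hy by lra.
      match goal with |- ?a = ?b => change (@eq C a b) end.
      unfold integrand2.
      rewrite gen_col2_p; [| apply m21_Gplus | apply Mp_11 | apply Mp_21; lra | apply Mp_22 | reflexivity].
      rewrite m11_Gplus by auto. rewrite Mp_12_val by lra.
      change (m22 (Psi2 y k)) with (snd (col2 (Psi2 y k))).
      rewrite (psi2_bot A B R0 Psi2 k col2 (or_intror eq_refl) Hs y ltac:(lra)).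
      unfold free2; mcbn.
      replace (cexp (c * RtoC y)) with
        (cexp (- Ci * k * RtoC (0 - y)) * cexp (2 * Ci * RtoC B * RtoC y) *
         cexp (- (Ci * RtoC B * RtoC y)) * cexp (- (Ci * (k + RtoC B) * RtoC (0 - y))))%C.
      + ring.
      + rewrite <- !cexp_add. unfold c. apply cexp_ext; destruct k; simpl; ring. }
  rewrite H0. unfold free2; mcbn.
  rewrite (cexp_is1 (Ci * RtoC B * RtoC 0))%C by (simpl; ring).
  rewrite (cexp_is1 (c * RtoC 0)) by (unfold c; destruct k; simpl; ring).
  replace (cexp (c * RtoC R0)) with (cexp (2 * Ci * RtoC R0 * (k + RtoC B)))
    by (unfold c; apply cexp_ext; destruct k; simpl; ring).
  unfold c. rewrite <- alg_gamma by auto. ring.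
- rewrite (psi2_bot A B R0 Psi2 k col2 (or_intror eq_refl) Hs 0 ltac:(lra)). unfold free2; mcbn.
  rewrite cexp_is1 by (simpl; ring). ring.
Qed.

Theorem proposition4 (A B R0 : R) (Psi1 Psi2 : R -> C -> M2) :
  0 < A -> 0 <= R0 ->
  (* Psi1^(1) on its natural domain  Im k >= 0, k <> B *)
  (forall k : C, 0 <= Im k -> k <> RtoC B -> solves1 A B (q0R A B R0) Psi1 col1 k) ->
  (* Psi1^(2) on Im k <= 0 *)
  (forall k : C, Im k <= 0 -> solves1 A B (q0R A B R0) Psi1 col2 k) ->
  (* Psi2^(1) on Im k <= 0 *)
  (forall k : C, Im k <= 0 -> solves2 A B (q0R A B R0) Psi2 col1 k) ->
  (* Psi2^(2) on Im k >= 0, k <> -B *)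
  (forall k : C, 0 <= Im k -> k <> RtoC (- B) -> solves2 A B (q0R A B R0) Psi2 col2 k) ->
  (forall k : C, 0 <= Im k -> k <> RtoC B -> k <> RtoC (- B) ->
     det2 (col1 (Psi1 0 k)) (col2 (Psi2 0 k)) =
     (1 + RtoC (A ^ 2) * cexp (4 * Ci * k * RtoC R0)
            / (4 * (k ^ 2 - RtoC (B ^ 2))))%C) /\
  (forall k : C, Im k <= 0 ->
     det2 (col1 (Psi2 0 k)) (col2 (Psi1 0 k)) = 1%C) /\
  (forall k : R, k <> B ->
     det2 (col1 (Psi2 0 (RtoC k))) (col1 (Psi1 0 (RtoC k))) =
     (- Ci * RtoC A * cexp (2 * Ci * RtoC R0 * RtoC (k - B))
        / (2 * RtoC (k - B)))%C).
Proof.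
intros HA HR H1 H2 H3 H4. split; [|split].
- intros k Hk Hb Hmb.
  assert (Hmb' : k <> (- RtoC B)%C) by (rewrite <- RtoC_opp; exact Hmb).
  destruct (psi1_col1_0 A B R0 Psi1 k HR Hb (H1 k Hk Hb)) as [E1 E2].
  destruct (psi2_col2_0 A B R0 Psi2 k HR Hmb' (H4 k Hk Hmb)) as [E3 E4].
  unfold det2. rewrite E1, E2, E3, E4.
  rewrite alg_final.
  + rewrite <- cexp_add. rewrite !RtoC_pow.
    replace (cexp (2 * Ci * RtoC R0 * (k - RtoC B) + 2 * Ci * RtoC R0 * (k + RtoC B)))
      with (cexp (4 * Ci * k * RtoC R0)) by (apply cexp_ext; destruct k; simpl; ring).
    replace (RtoC B ^ 2)%C with (RtoC B * RtoC B)%C by ring. unfold Cdiv. ring.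
  + apply sub_neq0; auto.
  + intro H. apply Hmb'. replace k with ((k + RtoC B) - RtoC B)%C by ring. rewrite H. ring.
- intros k Hk.
  destruct (psi2_col1_0 A B R0 Psi2 k HR (H3 k Hk)) as [E1 E2].
  destruct (psi1_col2_0 A B R0 Psi1 k HR (H2 k Hk)) as [E3 E4].
  unfold det2. rewrite E1, E2, E3, E4. ring.
- intros k Hk.
  assert (Hb : RtoC k <> RtoC B) by (intro H; apply Hk; apply RtoC_inj; exact H).
  assert (Him : Im (RtoC k) = 0) by reflexivity.
  destruct (psi2_col1_0 A B R0 Psi2 (RtoC k) HR (H3 (RtoC k) ltac:(lra))) as [E1 E2].
  destruct (psi1_col1_0 A B R0 Psi1 (RtoC k) HR Hb (H1 (RtoC k) ltac:(lra) Hb)) as [E3 E4].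
  unfold det2. rewrite E1, E2, E3, E4. rewrite RtoC_minus. ring.
Qed.
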